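(* Let $D$ and $D'$ be minimized DFAs over the same alphabet with $S(D)=S(D')$. Then $D\cong_I D'$.
   Context: All DFAs are complete and all states are reachable; a DFA is \emph{minimized} if it is the minimal DFA for its language (no two distinct states $p\ne q$ have $L(p)=L(q)$). For languages, $L\sim L'$ means $L\triangle L'$ is finite; $[L]$ is the $\sim$-class of $L$. For a state $q$ of $D=(Q,\Sigma,\delta,q_0,A)$, $L(q)$ is the language recognized by $(Q,\Sigma,\delta,q,A)$, and $S(D)=\{[L(q)]:q\in Q\}$. The \emph{infinite part} $I(D)$ is the set of states $q$ with $\{w:\delta(q_0,w)=q\}$ infinite. $D\cong_I D'$ means there is a bijection $f:I(D)\to I(D')$ with $q\in A\iff f(q)\in A'$ and $f(\delta(q,c))=\delta'(f(q),c)$ for all $q\in I(D)$, $c\in\Sigma$. *)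

(* Defs.v *)
From mathcomp Require Import all_boot.
Set Implicit Arguments. Unset Strict Implicit. Unset Printing Implicit Defensive.

Record dfa (Sigma : finType) := DFA {
  state : finType;
  delta : state -> Sigma -> state;
  start : state;
  accept : {set state}
}.

Section DFA.
Variable Sigma : finType.
Implicit Types (D : dfa Sigma).

Definition delta_star D (q : state D) (w : seq Sigma) : state D :=
  foldl (@delta _ D) q w.

Definition lang := seq Sigma -> Prop.

Definition lang_of D (q : state D) : lang :=
  fun w => delta_star q w \in accept D.

Definition finite_lang (L : lang) : Prop :=
  exists s : seq (seq Sigma), forall w, L w -> w \in s.

Definition lang_sim (L L' : lang) : Prop :=
  finite_lang (fun w => ~ (L w <-> L' w)).

Definition reachable D : Prop :=
  forall q : state D, exists w, delta_star (start D) w = q.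

Definition minimized D : Prop :=
  forall p q : state D, p <> q -> ~ (forall w, lang_of p w <-> lang_of q w).

(* S(D) = S(D'), unfolded: every class [L(q)] of D is a class [L(q')] of D'
   and conversely *)
Definition same_S D D' : Prop :=
  (forall q : state D, exists q' : state D', lang_sim (lang_of q) (lang_of q')) /\
  (forall q' : state D', exists q : state D, lang_sim (lang_of q) (lang_of q')).

Definition in_infinite_part D (q : state D) : Prop :=
  ~ finite_lang (fun w => delta_star (start D) w = q).

Definition iso_I D D' : Prop :=
  exists f : state D -> state D',
    [/\ (forall q, in_infinite_part q -> in_infinite_part (f q)),
        (forall p q, in_infinite_part p -> in_infinite_part q -> f p = f q -> p = q),
        (forall q', in_infinite_part q' -> exists2 q, in_infinite_part q & f q = q'),
        (forall q, in_infinite_part q -> (q \in accept D) = (f q \in accept D')) &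
        (forall q c, in_infinite_part q -> f (delta q c) = delta (f q) c)].

End DFA.

(* Main.v *)
Require Import Defs.
From mathcomp Require Import all_boot.
From Stdlib Require Import Classical ClassicalEpsilon.
From mathcomp Require Import zify.

Set Implicit Arguments. Unset Strict Implicit.
Section Aux.
Variable Sigma : finType.

Definition eqL (D D' : dfa Sigma) (p : state D) (q : state D') :=
  forall w, lang_of p w <-> lang_of q w.
Arguments eqL {D D'}.

Lemma lang_ds (D : dfa Sigma) (p : state D) v x :
  lang_of (delta_star p v) x = lang_of p (v ++ x).
Proof. by rewrite /lang_of /delta_star foldl_cat. Qed.

Lemma ds_cat (D : dfa Sigma) (p : state D) u v :
  delta_star p (u ++ v) = delta_star (delta_star p u) v.
Proof. by rewrite /delta_star foldl_cat. Qed.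

Lemma sumn_size (s : seq (seq Sigma)) w : w \in s -> size w <= sumn (map size s).
Proof.
elim: s => [|a s IH] //=; rewrite in_cons => /orP [/eqP -> | /IH H].
  exact: leq_addr.
exact: leq_trans H (leq_addl _ _).
Qed.

Lemma fin_bound (P : lang Sigma) : finite_lang P -> exists M, forall w, P w -> size w <= M.
Proof. move=> [s Hs]; exists (sumn (map size s)) => w /Hs; exact: sumn_size. Qed.

Fixpoint allw n : seq (seq Sigma) :=
  if n is n'.+1 then [::] :: [seq c :: w | c <- enum Sigma, w <- allw n']
  else [:: [::]].

Lemma allwP n w : size w <= n -> w \in allw n.
Proof.
elim: n w => [|n IH] [|c w] //=; try by rewrite ?mem_seq1 ?in_cons ?eqxx.
move=> Hs; rewrite in_cons; apply/orP; right.
apply: allpairs_f; first by rewrite mem_enum.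
exact: IH.
Qed.

Lemma long_word (D : dfa Sigma) (q : state D) M :
  in_infinite_part q -> exists w, delta_star (start D) w = q /\ M < size w.
Proof.
move=> HI; apply: NNPP => Hn; apply: HI; exists (allw M) => w Hw.
apply: allwP; rewrite leqNgt; apply/negP => Hlt; apply: Hn; by exists w.
Qed.

Lemma lang_sim_long (D D' : dfa Sigma) (p : state D) (p' : state D') :
  lang_sim (lang_of p) (lang_of p') ->
  exists N, forall w, N < size w -> eqL (delta_star p w) (delta_star p' w).
Proof.
move=> /fin_bound [M HM]; exists M => w Hw x.
rewrite !lang_ds; apply: NNPP => Hn.
have := HM _ Hn; rewrite size_cat; lia.
Qed.

Lemma lang_sim_sym (D D' : dfa Sigma) (p : state D) (p' : state D') :
  lang_sim (lang_of p) (lang_of p') -> lang_sim (lang_of p') (lang_of p).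
Proof. move=> [s Hs]; exists s => w Hw; apply: Hs => H; apply: Hw; tauto. Qed.

Lemma uniq_min (D : dfa Sigma) (p q : state D) :
  minimized D -> eqL p q -> p = q.
Proof. move=> Hm H; apply: NNPP => Hn; exact: (Hm p q Hn H). Qed.

Lemma eqL_ds (D D' : dfa Sigma) (p : state D) (p' : state D') v :
  eqL p p' -> eqL (delta_star p v) (delta_star p' v).
Proof. by move=> H x; rewrite !lang_ds. Qed.

Lemma partner (D D' : dfa Sigma) : reachable D' -> minimized D' ->
  (exists q0 : state D', lang_sim (lang_of (start D)) (lang_of q0)) ->
  forall q : state D, in_infinite_part q ->
  exists q' : state D', eqL q q' /\ in_infinite_part q'.
Proof.
move=> Hr Hm [q0 Hs] q HI.
have [N HN] := lang_sim_long Hs.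
have [w [Hw Hsz]] := long_word N HI.
exists (delta_star q0 w).
have Heq : eqL q (delta_star q0 w) by rewrite -Hw; exact: HN.
split=> // Hfin.
have [M HM] := fin_bound Hfin.
have [w2 [Hw2 Hsz2]] := long_word (N.+1 + M) HI.
set u := take N.+1 w2; set v := drop N.+1 w2.
have Hu : size u = N.+1 by rewrite size_takel //; lia.
have Hv : M < size v by rewrite size_drop; lia.
have H1 := eqL_ds v (HN u ltac:(lia)).
rewrite -ds_cat cat_take_drop Hw2 in H1.
have Hq' : delta_star (delta_star q0 u) v = delta_star q0 w.
  apply: uniq_min Hm _ => x; have := H1 x; have := Heq x; tauto.
have [z Hz] := Hr (delta_star q0 u).
have := HM (z ++ v); rewrite ds_cat Hz Hq' size_cat => /(_ erefl); lia.
Qed.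

End Aux.

Theorem mainTheorem6 (Sigma : finType) (D D' : dfa Sigma) :
  reachable D -> reachable D' ->
  minimized D -> minimized D' ->
  same_S D D' ->
  iso_I D D'.
Proof.
move=> Hr Hr' Hm Hm' [S1 S2].
have P1 := partner Hr' Hm' (S1 (start D)).
have P2 : forall q : state D', in_infinite_part q ->
    exists p : state D, eqL q p /\ in_infinite_part p.
  apply: partner Hr Hm _.
  have [p Hp] := S2 (start D'); exists p; exact: lang_sim_sym.
pose f (q : state D) := epsilon (inhabits (start D')) (fun q' => eqL q q').
have fspec : forall q : state D, (exists q' : state D', eqL q q') -> eqL q (f q).
  move=> q H; rewrite /f; exact: (@epsilon_spec _ (inhabits (start D')) (fun q' => eqL q q') H).
have fI : forall q : state D, in_infinite_part q -> exists q', eqL q q' /\ in_infinite_part q' /\ f q = q'.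
  move=> q HI; have [q' [Hq' HI']] := P1 q HI; exists q'; do 2 split=> //.
  have Hf := fspec q (ex_intro _ q' Hq').
  apply: uniq_min Hm' _ => x; have := Hf x; have := Hq' x; tauto.
exists f; split.
- by move=> q /fI [q' [_ [? ->]]].
- move=> p q Hp Hq Hf.
  have [p' [Hp' [_ Ep]]] := fI p Hp; have [q' [Hq' [_ Eq]]] := fI q Hq.
  apply: uniq_min Hm _ => x; have := Hp' x; have := Hq' x; rewrite -Ep -Eq Hf; tauto.
- move=> q' HI'; have [p [Hp HIp]] := P2 q' HI'; exists p => //.
  have [r [Hr1 [_ ->]]] := fI p HIp.
  apply: uniq_min Hm' _ => x; have := Hp x; have := Hr1 x; tauto.
- move=> q HI; have [q' [Hq' [_ ->]]] := fI q HI.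
  have := Hq' [::]; rewrite /lang_of /delta_star /= => H.
  by apply/idP/idP => ?; apply/H.
- move=> q c HI; have [q' [Hq' [_ ->]]] := fI q HI.
  have Hd : eqL (delta q c) (delta q' c).
    move=> x; have := eqL_ds [:: c] Hq' x; done.
  have Hf := fspec _ (ex_intro _ _ Hd).
  apply: uniq_min Hm' _ => x; have := Hf x; have := Hd x; tauto.
Qed.
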